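(* Let $l>0$, $d>0$, $V>0$, $\gamma_{\max}\in(0,\pi/2)$, and $k_1,k_2\in\mathbb{R}$. Let $\overline{\kappa}_0=\dfrac{\tan\gamma_{\max}}{\sqrt{l^2+d^2\tan^2\gamma_{\max}}}$. Suppose either (1) $k_1<0$ and $k_2>\dfrac{d}{l}\dfrac{\tan^2\gamma_{\max}}{\sqrt{l^2+d^2\tan^2\gamma_{\max}}}$, or (2) $k_1>0$ and $k_2<-\dfrac{1}{d}$. Then for every constant curvature $\kappa_0$ with $|\kappa_0|\le\overline{\kappa}_0$, the desired path-following solution ($e_{\rm D}\equiv0$, $\hat\theta_{\rm D}\equiv 0$) of the closed-loop system is stable, in the sense that, with $\lambda_1=\sqrt{1-d^2\kappa_0^2}$ and $\lambda_2=1+(l^2-d^2)\kappa_0^2$, both eigenvalues of the matrix $$\mathbf{A}=\begin{bmatrix}\dfrac{Vd}{l}\dfrac{\lambda_2}{\lambda_1}k_1k_2 & \dfrac{V}{\lambda_1}\Big(1+\dfrac{d}{l}\lambda_2k_1\Big)\\[2mm] \dfrac{V}{l}\Big(\lambda_2k_1k_2-\dfrac{l}{\lambda_1}\kappa_0^2\Big) & \dfrac{V\lambda_2}{l}k_1\end{bmatrix}$$ have strictly negative real parts.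
   Context: Path-following setting: a vehicle (kinematic bicycle model, wheels without side slip, constant longitudinal speed $V>0$, wheelbase $l$, steering angle $\gamma$) must make a point A on its longitudinal symmetry axis, at distance $d$ ahead of the rear axle center, follow a planar path. With $s_{\rm D}$ the arc length of the closest path point D, $\kappa_{\rm D}$ the path curvature at D, $e_{\rm D}$ the signed lateral deviation of A from the path and $\theta_{\rm D}$ the yaw angle error relative to the path tangent at D, the dynamics are $\dot s_{\rm D}=\frac{V}{1-e_{\rm D}\kappa_{\rm D}}(\cos\theta_{\rm D}-\frac{d}{l}\tan\gamma\sin\theta_{\rm D})$, $\dot e_{\rm D}=V(\sin\theta_{\rm D}+\frac{d}{l}\tan\gamma\cos\theta_{\rm D})$, $\dot\theta_{\rm D}=\frac{V}{l}\tan\gamma-\frac{V\kappa_{\rm D}}{1-e_{\rm D}\kappa_{\rm D}}(\cos\theta_{\rm D}-\frac{d}{l}\tan\gamma\sin\theta_{\rm D})$. The steering angle is set to $\gamma=\gamma_{\rm ff}+\gamma_{\rm fb}$ with $\gamma_{\rm ff}=\arctan\frac{l\kappa_{\rm D}}{\sqrt{1-(d\kappa_{\rm D})^2}}$ and $\gamma_{\rm fb}=g\big(k_1(\theta_{\rm D}-\theta_0+\arctan(k_2e_{\rm D}))\big)$, where $\theta_0=-\arcsin(d\kappa_{\rm D})$ and $g$ is a bounded, odd, continuously differentiable, increasing function with $g'(0)=1$ (e.g. $g(x)=\frac{2g_{\rm sat}}{\pi}\arctan(\frac{\pi}{2g_{\rm sat}}x)$). Set $\hat\theta_{\rm D}=\theta_{\rm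 D}-\theta_0$. For constant curvature $\kappa_{\rm D}\equiv\kappa_0$ the closed loop has the desired solution $e_{\rm D}\equiv0$, $\hat\theta_{\rm D}\equiv0$; the matrix $\mathbf{A}$ is the Jacobian of the closed-loop $(e_{\rm D},\hat\theta_{\rm D})$ dynamics at this solution, and stability is understood as this linearization being Hurwitz. The bound $|\kappa_0|\le\overline\kappa_0$ is the standing assumption that the curvature can be followed with steering angle at most $\gamma_{\max}$. *)

(* Defs.v *)
From HB Require Import structures.
From mathcomp Require Import all_boot all_order all_algebra.
From mathcomp Require Import complex.
From mathcomp Require Import all_classical all_reals all_analysis.
Set Implicit Arguments. Unset Strict Implicit. Unset Printing Implicit Defensive.
Import Order.TTheory GRing.Theory Num.Theory.
Local Open Scope ring_scope.

Definition kappa_bar {R : realType} (l d gmax : R) : R :=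
  tan gmax / Num.sqrt (l ^+ 2 + d ^+ 2 * tan gmax ^+ 2).

Definition lambda1 {R : realType} (d k0 : R) : R := Num.sqrt (1 - d ^+ 2 * k0 ^+ 2).
Definition lambda2 {R : realType} (l d k0 : R) : R := 1 + (l ^+ 2 - d ^+ 2) * k0 ^+ 2.

(* The Jacobian A of the closed loop (e_D, hat theta_D) dynamics. *)
Definition Amat {R : realType} (l d V k1 k2 k0 : R) : 'M[R]_2 :=
  let la1 := lambda1 d k0 in
  let la2 := lambda2 l d k0 in
  \matrix_(i < 2, j < 2)
    if (i == 0) && (j == 0) then V * d / l * (la2 / la1) * k1 * k2
    else if (i == 0) then V / la1 * (1 + d / l * la2 * k1)
    else if (j == 0) then V / l * (la2 * k1 * k2 - l / la1 * k0 ^+ 2)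
    else V * la2 / l * k1.

Definition hurwitz {R : realType} (A : 'M[R]_2) : Prop :=
  forall z : R[i], eigenvalue (map_mx (real_complex R) A) z -> complex.Re z < 0.

(* Main.v *)
Require Import Defs.
From HB Require Import structures.
From mathcomp Require Import all_boot all_order all_algebra.
From mathcomp Require Import complex.
From mathcomp Require Import all_classical all_reals all_analysis.
From mathcomp Require Import ring lra.
Import Order.TTheory GRing.Theory Num.Theory.
Local Open Scope ring_scope.

Lemma quad_re (R : realType) (T D x y : R) : T < 0 -> 0 < D ->
  x * x - y * y - T * x + D = 0 -> x * y + y * x - T * y = 0 -> x < 0.
Proof.
move=> hT hD h1 h2.
have [y00|y0] := eqVneq y 0.
  move: h1; rewrite y00 => h1.
  rewrite ltNge; apply/negP => x0.
  have : 0 < x * x - 0 * 0 - T * x + D by rewrite mul0r subr0; nra.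
  by rewrite h1 ltxx.
have : y * (2 * x - T) = 0 by rewrite -h2; ring.
move/eqP; rewrite mulf_eq0 (negbTE y0) /= => /eqP h; nra.
Qed.

Lemma hurwitz2 (R : realType) (A : 'M[R]_2) :
  A 0 0 + A 1 1 < 0 -> 0 < A 0 0 * A 1 1 - A 0 1 * A 1 0 -> hurwitz A.
Proof.
move=> hT hD z /eigenvalueP [v hv nz].
have l1 : lift ord0 ord0 = 1 :> 'I_2 by apply: val_inj.
pose a : R := A 0 0; pose b : R := A 0 1; pose c : R := A 1 0; pose e : R := A 1 1.
pose v0 : R[i] := v 0 0; pose v1 : R[i] := v 0 1.
have E0 : v0 * (a%:C)%C + v1 * (c%:C)%C = z * v0.
  have := congr1 (fun M : 'rV[R[i]]_2 => M 0 0) hv.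
  by rewrite /= !mxE !big_ord_recl big_ord0 !mxE addr0 l1 => <-.
have E1 : v0 * (b%:C)%C + v1 * (e%:C)%C = z * v1.
  have := congr1 (fun M : 'rV[R[i]]_2 => M 0 1) hv.
  by rewrite /= !mxE !big_ord_recl big_ord0 !mxE addr0 l1 => <-.
pose dt : R[i] := ((a%:C)%C - z) * ((e%:C)%C - z) - (b%:C)%C * (c%:C)%C.
have h0 : v0 * dt = 0.
  have -> : v0 * dt = ((e%:C)%C - z) * (v0 * (a%:C)%C + v1 * (c%:C)%C - z * v0)
     - (c%:C)%C * (v0 * (b%:C)%C + v1 * (e%:C)%C - z * v1) by rewrite /dt; ring.
  by rewrite E0 E1 !subrr !mulr0 subrr.
have h1 : v1 * dt = 0.
  have -> : v1 * dt = ((a%:C)%C - z) * (v0 * (b%:C)%C + v1 * (e%:C)%C - z * v1)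
     - (b%:C)%C * (v0 * (a%:C)%C + v1 * (c%:C)%C - z * v0) by rewrite /dt; ring.
  by rewrite E0 E1 !subrr !mulr0 subrr.
have hdt : dt = 0.
  apply: contraNeq nz => hdt; apply/eqP/matrixP => i j.
  rewrite (ord1 i) mxE; case: j => [[|[|//]] hj].
  - move/eqP: h0; rewrite mulf_eq0 (negbTE hdt) orbF => /eqP h.
    by rewrite -[RHS]h /v0; congr (v _ _); apply: val_inj.
  - move/eqP: h1; rewrite mulf_eq0 (negbTE hdt) orbF => /eqP h.
    by rewrite -[RHS]h /v1; congr (v _ _); apply: val_inj.
move: hdt; rewrite /dt; clear -hT hD; case: z => x y /eqP; rewrite eq_complex /= => /andP[/eqP r1 /eqP r2].

move: hT hD; rewrite -/a -/b -/c -/e => hT hD; clearbody a b c e.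
apply: (@quad_re R (a + e) (a * e - b * c) x y) => //.
  by rewrite -r1; ring.
have -> : x * y + y * x - (a + e) * y =
  ((a - x) * (0 - y) + (0 - y) * (e - x) - (b * 0 + 0 * c)) by ring.
by rewrite r2.
Qed.
Lemma mainfacts (R : realType) (l d V gmax k1 k2 : R) :
  0 < l -> 0 < d -> 0 < V -> 0 < gmax -> gmax < pi / 2 ->
  ((k1 < 0 /\ k2 > d / l * (tan gmax ^+ 2 / Num.sqrt (l ^+ 2 + d ^+ 2 * tan gmax ^+ 2)))
   \/ (0 < k1 /\ k2 < - d^-1)) ->
  forall k0 : R, `|k0| <= kappa_bar l d gmax ->
  let A := Amat l d V k1 k2 k0 in
  A 0 0 + A 1 1 < 0 /\ 0 < A 0 0 * A 1 1 - A 0 1 * A 1 0.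
Proof.
move=> hl hd hV _ _ hk k0 hk0 A.
rewrite /A /Amat !mxE /=.
rewrite /kappa_bar in hk0.
move: hk hk0.
set t := tan gmax.
set W := l ^+ 2 + d ^+ 2 * t ^+ 2.
set S := Num.sqrt W.
have hW : 0 < W by rewrite /W; nra.
have hS : 0 < S by rewrite sqrtr_gt0.
have hS2 : S ^+ 2 = W by rewrite sqr_sqrtr // ltW.
clearbody S.
move=> hk hk0.
have hkS : `|k0| * S <= t by rewrite -ler_pdivlMr.
have hk2 : k0 ^+ 2 * W <= t ^+ 2.
  have n0 := normr_ge0 k0.
  have e : k0 ^+ 2 = `|k0| ^+ 2 by rewrite real_normK // num_real.
  have hp : 0 <= `|k0| * S by apply: mulr_ge0 => //; apply: ltW.
  have := mulr_ge0 (ltac:(by rewrite subr_ge0) : 0 <= t - `|k0| * S) (addr_ge0 hp (le_trans hp hkS)).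
  rewrite e -hS2 => h; nra.
set m := 1 - d ^+ 2 * k0 ^+ 2.
have hmW : l ^+ 2 <= m * W.
  have hd2 : 0 <= d ^+ 2 by apply: sqr_ge0.
  have := ler_wpM2l hd2 hk2.
  rewrite /m /W => h; nra.
have hm : 0 < m by nra.
have hm1 : m <= 1 by rewrite /m; nra.
rewrite /lambda1 -/m /lambda2.
set L1 := Num.sqrt m.
have hL1 : 0 < L1 by rewrite sqrtr_gt0.
have hL12 : L1 ^+ 2 = m by rewrite sqr_sqrtr // ltW.
clearbody L1.
have hL1le : L1 <= 1.
  rewrite leNgt; apply/negP => h.
  have : 1 * 1 < L1 * L1 by apply: ltr_pM.
  rewrite mul1r -expr2 hL12; lra.
have hL2 : 0 < 1 + (l ^+ 2 - d ^+ 2) * k0 ^+ 2 by rewrite /m in hm; nra.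
set L2 := 1 + (l ^+ 2 - d ^+ 2) * k0 ^+ 2 in hL2 *.
clearbody L2.
have hL1S : l <= L1 * S.
  have e : (L1 * S) ^+ 2 = m * W by rewrite exprMn hL12 hS2.
  have hp : 0 < L1 * S by apply: mulr_gt0.
  rewrite leNgt; apply/negP => h.
  have : (L1 * S) * (L1 * S) < l * l by apply: ltr_pM => //; apply: ltW.
  rewrite -expr2 e; lra.
have ln0 : l != 0 by rewrite gt_eqF.
have L1n0 : L1 != 0 by rewrite gt_eqF.
have -> : V * d / l * (L2 / L1) * k1 * k2 + V * L2 / l * k1 =
    (V * L2 / l) * k1 * ((d * k2 + L1) / L1) by field; rewrite ln0 L1n0.
have -> : V * d / l * (L2 / L1) * k1 * k2 * (V * L2 / l * k1) -
   V / L1 * (1 + d / l * L2 * k1) * (V / l * (L2 * k1 * k2 - l / L1 * k0 ^+ 2)) =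
   (V ^+ 2 / (l * L1)) * ((- L2 * k1 * k2 * L1 + k0 ^+ 2 * (l + d * L2 * k1)) / L1) by field; rewrite ln0 L1n0.
have hX : 0 < V * L2 / l by apply: divr_gt0 => //; apply: mulr_gt0.
have hY : 0 < V ^+ 2 / (l * L1) by apply: divr_gt0; [apply: exprn_gt0|apply: mulr_gt0].
case: hk => [[hk1 hk2'] | [hk1 hk2']].
- have e : d / l * (t ^+ 2 / S) = d * t ^+ 2 / (l * S) by field; rewrite gt_eqF.
  rewrite e ltr_pdivrMr in hk2'; last by apply: mulr_gt0.
  have hlS : 0 < l * S by apply: mulr_gt0.
  have hdt : 0 <= d * t ^+ 2 by apply: mulr_ge0; [apply: ltW|apply: sqr_ge0].
  have hk2p : 0 < k2.
    have : 0 < k2 * (l * S) by apply: le_lt_trans hk2'.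
    by rewrite pmulr_lgt0.
  have hkey : d * k0 ^+ 2 < k2 * L1.
    have : d * k0 ^+ 2 * S ^+ 2 < k2 * L1 * S ^+ 2.
      have h1 : k2 * S * l <= k2 * S * (L1 * S).
        by apply: ler_wpM2l => //; apply: mulr_ge0; apply: ltW.
      have h2 : d * (k0 ^+ 2 * W) <= d * t ^+ 2 by apply: ler_wpM2l => //; apply: ltW.
      have -> : k2 * L1 * S ^+ 2 = k2 * S * (L1 * S) by ring.
      have -> : d * k0 ^+ 2 * S ^+ 2 = d * (k0 ^+ 2 * W) by rewrite hS2; ring.
      have e3 : k2 * S * l = k2 * (l * S) by ring.
      lra.
    by rewrite ltr_pM2r // exprn_gt0.
  split.
    have hZ : 0 < (d * k2 + L1) / L1 by apply: divr_gt0 => //; nra.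
    rewrite -mulrA (mulrC k1) mulrA.
    by rewrite nmulr_llt0 // mulr_gt0.
  apply: mulr_gt0 => //; apply: divr_gt0 => //.
  have p1 : 0 < L2 * (- k1) * (k2 * L1 - d * k0 ^+ 2).
    by apply: mulr_gt0; [apply: mulr_gt0 => //; rewrite oppr_gt0|rewrite subr_gt0].
  have p2 : 0 <= l * k0 ^+ 2 by apply: mulr_ge0; [apply: ltW|apply: sqr_ge0].
  have -> : - L2 * k1 * k2 * L1 + k0 ^+ 2 * (l + d * L2 * k1) =
    L2 * (- k1) * (k2 * L1 - d * k0 ^+ 2) + l * k0 ^+ 2 by ring.
  lra.
- have hdk : d * k2 < -1.
    have : d * k2 < d * (- d^-1) by rewrite ltr_pM2l.
    by rewrite mulrN mulfV ?gt_eqF.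
  split.
    have hZ : (d * k2 + L1) / L1 < 0 by rewrite ltr_pdivrMr // mul0r; lra.
    rewrite -mulrA (mulrC k1) mulrA.
    by rewrite pmulr_llt0 // pmulr_rlt0.
  apply: mulr_gt0 => //; apply: divr_gt0 => //.
  have hk2n : 0 < - k2 by rewrite oppr_gt0; nra.
  have p1 : 0 < L2 * k1 * (- k2) * L1 by do ! apply: mulr_gt0.
  have p2 : 0 <= k0 ^+ 2 * (l + d * L2 * k1).
    apply: mulr_ge0; first exact: sqr_ge0.
    apply: addr_ge0; first exact: ltW.
    by apply: mulr_ge0; apply: ltW => //; apply: mulr_gt0.
  have -> : - L2 * k1 * k2 * L1 = L2 * k1 * (- k2) * L1 by ring.
  lra.
Qed.

Theorem proposition1 (R : realType) (l d V gmax k1 k2 : R) :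
  0 < l -> 0 < d -> 0 < V -> 0 < gmax -> gmax < pi / 2 ->
  ((k1 < 0 /\ k2 > d / l * (tan gmax ^+ 2 / Num.sqrt (l ^+ 2 + d ^+ 2 * tan gmax ^+ 2)))
   \/ (0 < k1 /\ k2 < - d^-1)) ->
  forall k0 : R, `|k0| <= kappa_bar l d gmax ->
    hurwitz (Amat l d V k1 k2 k0).
Proof.
move=> hl hd hV hg1 hg2 hk k0 hk0.
have [h1 h2] := mainfacts _ _ _ _ _ _ _ hl hd hV hg1 hg2 hk k0 hk0.
exact: hurwitz2.
Qed.
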